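(* Let $I\subseteq\mathbb K[x,y]$ be a good ideal. Then $I^k$ is a good ideal for every integer $k\ge1$.
   Context: Let $\mathbb K$ be a field, $R=\mathbb K[x_1,\dots,x_n]$ (here $n=2$), $\mathfrak m=\langle x_1,\dots,x_n\rangle$, $\mathbb N=\{0,1,2,\dots\}$. A monomial $x_1^{\alpha_1}\cdots x_n^{\alpha_n}$ is identified with the point $(\alpha_1,\dots,\alpha_n)\in\mathbb N^n$. For a monomial ideal $I$, $G(I)$ denotes its (unique) minimal monomial generating set. If $I$ is an $\mathfrak m$-primary monomial ideal, then for each $i$ there is a unique $d_i\ge1$ with $x_i^{d_i}\in G(I)$; write $\mu_i=x_i^{d_i}$. For $(a_1,\dots,a_n)\in\mathbb N^n$ the box associated to $I$ is $B_{a_1,\dots,a_n}=([a_1d_1,(a_1+1)d_1]\times\cdots\times[a_nd_n,(a_n+1)d_n])\cap\mathbb N^n$; a monomial belongs to a box if its exponent vector does. An $\mathfrak m$-primary monomial ideal $I$ is called good if for every integer $l\ge1$, every element of $G(I^l)$ belongs to some box $B_{a_1,\dots,a_n}$ with $a_1+\dots+a_n=l-1$; otherwise bad. (Goodness of $I^k$ is defined with respect to its own pure powers $x_i^{kd_i}\in G(I^k)$.) *)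

(* Defs.v *)
From mathcomp Require Import all_boot.
Set Implicit Arguments. Unset Strict Implicit. Unset Printing Implicit Defensive.

(* A set of monomials x^a y^b, identified with exponent vectors (a,b). *)
Definition mset := nat * nat -> Prop.

Definition mdvd (a b : nat * nat) : bool := (a.1 <= b.1) && (a.2 <= b.2).

Definition mmul (a b : nat * nat) : nat * nat := (a.1 + b.1, a.2 + b.2).
Definition mprod (s : seq (nat * nat)) : nat * nat := foldr mmul (0, 0) s.

(* The set of monomials of a monomial ideal is closed under multiplication
   by monomials (equivalently: upward closed for divisibility). *)
Definition is_monomial_ideal (I : mset) : Prop :=
  forall a b, I a -> mdvd a b -> I b.

Definition ideal_pow (I : mset) (l : nat) : mset :=
  fun m => exists s : seq (nat * nat),
    size s = l /\ (forall a, a \in s -> I a) /\ mdvd (mprod s) m.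

Definition mingens (I : mset) : mset :=
  fun m => I m /\ forall m', I m' -> mdvd m' m -> m' = m.

Definition m_primary (I : mset) : Prop :=
  ~ I (0, 0) /\ (exists a, I (a, 0)) /\ (exists b, I (0, b)).

Definition in_box (d1 d2 a1 a2 : nat) (m : nat * nat) : Prop :=
  a1 * d1 <= m.1 <= a1.+1 * d1 /\ a2 * d2 <= m.2 <= a2.+1 * d2.

Definition good (I : mset) : Prop :=
  m_primary I /\
  forall d1 d2, mingens I (d1, 0) -> mingens I (0, d2) ->
  forall l, 0 < l -> forall m, mingens (ideal_pow I l) m ->
  exists a1 a2, a1 + a2 = l.-1 /\ in_box d1 d2 a1 a2 m.

(* Main.v *)
Require Import Defs.
From mathcomp Require Import all_boot.
From mathcomp Require Import zify.
From Stdlib Require Import Classical.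
Set Implicit Arguments. Unset Strict Implicit.

Lemma mprod_cat s t : mprod (s ++ t) = mmul (mprod s) (mprod t).
Proof.
elim: s => [|x s IH] /=; first by case: (mprod t).
rewrite IH /mmul /=; congr pair; lia.
Qed.

Lemma mdvd_refl a : mdvd a a.
Proof. by rewrite /mdvd !leqnn. Qed.

Lemma mdvd_trans a b c : mdvd a b -> mdvd b c -> mdvd a c.
Proof. rewrite /mdvd => /andP[h1 h2] /andP[h3 h4]; apply/andP; split; lia. Qed.

Lemma mdvd_mmul a b c d : mdvd a b -> mdvd c d -> mdvd (mmul a c) (mmul b d).
Proof. rewrite /mdvd /mmul /= => /andP[h1 h2] /andP[h3 h4]; apply/andP; split; lia. Qed.

Lemma mem_mdvd_mprod x s : x \in s -> mdvd x (mprod s).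
Proof.
elim: s => [|y s IH] //=; rewrite in_cons => /orP[/eqP->|/IH].
  rewrite /mdvd /mmul /=; apply/andP; split; lia.
rewrite /mdvd /mmul /= => /andP[h1 h2]; apply/andP; split; lia.
Qed.

Lemma pow_pow1 I k s : (forall a, a \in s -> ideal_pow I k a) ->
  exists t, size t = k * size s /\ (forall x, x \in t -> I x) /\ mdvd (mprod t) (mprod s).
Proof.
elim: s => [|a s IH] H.
  exists [::]; split; first by rewrite muln0.
  by split => //; rewrite mdvd_refl.
have [t' [h1 [h2 h3]]] := IH (fun b hb => H b (mem_behead (s:=a::s) hb)).
have [ta [g1 [g2 g3]]] := H a (mem_head _ _).
exists (ta ++ t'); split; first by rewrite size_cat g1 h1 /=; lia.
split; first by move=> x; rewrite mem_cat => /orP[/g2|/h2].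
by rewrite mprod_cat /=; apply: mdvd_mmul.
Qed.

Lemma pow_pow2 I k l t : size t = k * l -> (forall x, x \in t -> I x) ->
  exists s, size s = l /\ (forall a, a \in s -> ideal_pow I k a) /\ mprod s = mprod t.
Proof.
elim: l t => [|l IH] t St Ht.
  exists [::]; move: St; rewrite muln0 => /size0nil ->; by split.
have Sd : size (drop k t) = k * l by rewrite size_drop St; lia.
have [s' [h1 [h2 h3]]] := IH (drop k t) Sd (fun x hx => Ht x (mem_drop hx)).
exists (mprod (take k t) :: s'); split; first by rewrite /= h1.
split.
  move=> a; rewrite in_cons => /orP[/eqP->|/h2 //].
  exists (take k t); split; first by rewrite size_take St; case: ifP => //; lia.
  split; last exact: mdvd_refl.
  by move=> x hx; apply: Ht; apply: mem_take hx.
by rewrite /= h3 -mprod_cat cat_take_drop.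
Qed.

Lemma pow_pow I k l m : ideal_pow (ideal_pow I k) l m <-> ideal_pow I (k * l) m.
Proof.
split.
  move=> [s [Ss [Hs Hd]]].
  have [t [h1 [h2 h3]]] := pow_pow1 Hs.
  exists t; split; first by rewrite h1 Ss.
  split => //; exact: mdvd_trans h3 Hd.
move=> [t [St [Ht Hd]]].
have [s [h1 [h2 h3]]] := pow_pow2 St Ht.
by exists s; split => //; split => //; rewrite h3.
Qed.

Lemma min_exists (P : nat -> Prop) n : P n -> exists d, P d /\ forall c, P c -> d <= c.
Proof.
elim: n {-2}n (leqnn n) => [|N IH] n Hn Pn.
  exists n; split => // c _; lia.
destruct (classic (exists c, c < n /\ P c)) as [[c [h1 h2]]|H].
  apply: (IH c) => //; lia.
exists n; split => // c Pc; rewrite leqNgt; apply/negP => hc; apply: H; by exists c.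
Qed.

Lemma mprod_nseq k a : mprod (nseq k a) = (k * a.1, k * a.2).
Proof. elim: k => [|k IH] /=; first by rewrite !mul0n. by rewrite IH /mmul /= !mulSn. Qed.

Lemma mprod_ge1 d t : (forall x, x \in t -> d <= x.1) -> size t * d <= (mprod t).1.
Proof.
elim: t => [|[x1 x2] t IH] H //=.
rewrite mulSn /mmul /=; have := H _ (mem_head _ _); have := IH (fun y hy => H y (mem_behead (s:=(x1,x2)::t) hy)); simpl; lia.
Qed.

Lemma mprod_ge2 d t : (forall x, x \in t -> d <= x.2) -> size t * d <= (mprod t).2.
Proof.
elim: t => [|[x1 x2] t IH] H //=.
rewrite mulSn /mmul /=; have := H _ (mem_head _ _); have := IH (fun y hy => H y (mem_behead (s:=(x1,x2)::t) hy)); simpl; lia.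
Qed.

Lemma mingens_ext (A B : mset) m : (forall x, A x <-> B x) -> mingens A m -> mingens B m.
Proof. move=> E [h1 h2]; split; first by apply/E. by move=> m' /E; apply: h2. Qed.

Lemma pure1 I k : is_monomial_ideal I -> 0 < k -> (exists a, I (a, 0)) ->
  forall e, mingens (ideal_pow I k) (e, 0) ->
  exists d, mingens I (d, 0) /\ e = k * d.
Proof.
move=> MI k0 [a Ia] e [Je Me].
have [d [Id Hd]] := @min_exists (fun c => I (c, 0)) a Ia.
exists d.
have mgI : mingens I (d, 0).
  split => // -[c1 c2] Ic; rewrite /mdvd /= => /andP[h1 h2].
  have c20 : c2 = 0 by lia.
  subst c2; have := Hd _ Ic; move=> h; congr pair; lia.
split => //.
have [t [St [Ht Dt]]] := Je.
have kd : k * d <= e.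
  have := @mprod_ge1 d t.
  have H : forall x, x \in t -> d <= x.1.
    move=> [x1 x2] hx; have := mem_mdvd_mprod hx; have := Ht _ hx.
    move: Dt; rewrite /mdvd /= => /andP[h1 h2] Ix /andP[h3 h4].
    have x20 : x2 = 0 by lia.
    subst x2; exact: Hd.
  move=> /(_ H); rewrite St; move: Dt; rewrite /mdvd /= => /andP[h1 h2]; lia.
have J' : ideal_pow I k (k * d, 0).
  exists (nseq k (d, 0)); split; first by rewrite size_nseq.
  split; first by move=> x /nseqP[-> _].
  by rewrite mprod_nseq /= muln0 mdvd_refl.
have := Me _ J'; rewrite /mdvd /= kd leqnn => /(_ isT) [] ->; done.
Qed.

Lemma pure2 I k : is_monomial_ideal I -> 0 < k -> (exists a, I (0, a)) ->
  forall e, mingens (ideal_pow I k) (0, e) ->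
  exists d, mingens I (0, d) /\ e = k * d.
Proof.
move=> MI k0 [a Ia] e [Je Me].
have [d [Id Hd]] := @min_exists (fun c => I (0, c)) a Ia.
exists d.
have mgI : mingens I (0, d).
  split => // -[c1 c2] Ic; rewrite /mdvd /= => /andP[h1 h2].
  have c10 : c1 = 0 by lia.
  subst c1; have := Hd _ Ic; move=> h; congr pair; lia.
split => //.
have [t [St [Ht Dt]]] := Je.
have kd : k * d <= e.
  have := @mprod_ge2 d t.
  have H : forall x, x \in t -> d <= x.2.
    move=> [x1 x2] hx; have := mem_mdvd_mprod hx; have := Ht _ hx.
    move: Dt; rewrite /mdvd /= => /andP[h1 h2] Ix /andP[h3 h4].
    have x10 : x1 = 0 by lia.
    subst x1; exact: Hd.
  move=> /(_ H); rewrite St; move: Dt; rewrite /mdvd /= => /andP[h1 h2]; lia.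
have J' : ideal_pow I k (0, k * d).
  exists (nseq k (0, d)); split; first by rewrite size_nseq.
  split; first by move=> x /nseqP[-> _].
  by rewrite mprod_nseq /= muln0 mdvd_refl.
have := Me _ J'; rewrite /mdvd /= kd => /(_ isT) [] ->; done.
Qed.

Lemma arith k l a1 a2 : 0 < k -> 0 < l -> a1 + a2 = (k * l).-1 ->
  a1 %/ k + a2 %/ k = l.-1.
Proof.
move=> k0 l0 E.
have e1 := divn_eq a1 k; have e2 := divn_eq a2 k.
have r1 := ltn_pmod a1 k0; have r2 := ltn_pmod a2 k0.
set b1 := a1 %/ k in e1 *; set b2 := a2 %/ k in e2 *.
set q1 := a1 %% k in e1 r1; set q2 := a2 %% k in e2 r2.
have kl : 0 < k * l by rewrite muln_gt0 k0.
have A : k * (b1 + b2) < k * l by nia.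
have B : k * l < k * (b1 + b2 + 2) by nia.
rewrite ltn_pmul2l // in A; rewrite ltn_pmul2l // in B.
lia.
Qed.

Theorem mainTheorem13 (I : mset) :
  is_monomial_ideal I -> good I ->
  forall k : nat, 0 < k -> good (ideal_pow I k).
Proof.
move=> MI [[I00 [[a Ia] [b Ib]]] GI] k k0.
split.
  split.
    move=> [t [St [Ht Dt]]].
    case: t St Ht Dt => [|x t] /=; first by move=> E; move: k0; rewrite -E.
    move=> _ Ht Dt; apply: I00.
    have Ix := Ht x (mem_head _ _).
    apply: (MI _ _ Ix).
    have := mem_mdvd_mprod (mem_head x t) => /mdvd_trans /(_ Dt).
    rewrite /mdvd /= => /andP[h1 h2]; apply/andP; split; lia.
  split.
    exists (k * a); exists (nseq k (a, 0)); split; first by rewrite size_nseq.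
    split; first by move=> x /nseqP[-> _].
    by rewrite mprod_nseq /= muln0 mdvd_refl.
  exists (k * b); exists (nseq k (0, b)); split; first by rewrite size_nseq.
  split; first by move=> x /nseqP[-> _].
  by rewrite mprod_nseq /= muln0 mdvd_refl.
move=> e1 e2 He1 He2 l l0 m Hm.
have [d1 [Hd1 ->]] := pure1 MI k0 (ex_intro _ a Ia) He1.
have [d2 [Hd2 ->]] := pure2 MI k0 (ex_intro _ b Ib) He2.
have Hm' : mingens (ideal_pow I (k * l)) m.
  apply: mingens_ext Hm => x; exact: pow_pow.
have kl : 0 < k * l by rewrite muln_gt0 k0.
have [a1 [a2 [E [/andP[h1 h2] /andP[h3 h4]]]]] := GI d1 d2 Hd1 Hd2 (k * l) kl m Hm'.
exists (a1 %/ k), (a2 %/ k); split; first exact: arith E.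
have f1 := divn_eq a1 k; have f2 := divn_eq a2 k.
have r1 := ltn_pmod a1 k0; have r2 := ltn_pmod a2 k0.
move: h1 h2 h3 h4.
set b1 := a1 %/ k in f1 *; set b2 := a2 %/ k in f2 *.
set q1 := a1 %% k in f1 r1; set q2 := a2 %% k in f2 r2.
move=> h1 h2 h3 h4.
rewrite /in_box; split; apply/andP; split.
- apply: leq_trans h1; rewrite mulnA leq_mul2r; apply/orP; right; lia.
- apply: leq_trans h2 _; rewrite mulnA leq_mul2r; apply/orP; right; lia.
- apply: leq_trans h3; rewrite mulnA leq_mul2r; apply/orP; right; lia.
- apply: leq_trans h4 _; rewrite mulnA leq_mul2r; apply/orP; right; lia.
Qed.
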